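(* Let $k\equiv\pm1,\pm3\pmod{10}$. Then $\operatorname{Ker}\nu_{G^k}=\{M=\begin{pmatrix} a&b\\ c&d\end{pmatrix}\in\Gamma_{\theta,5}: b,c\in5\mathbb{Z}\text{ and }\tfrac b5\equiv\tfrac c5\pmod5\}$; in particular $\operatorname{Ker}\nu_{G^k}=\operatorname{Ker}\nu_{F^k}$.
   Context: $\Gamma_{\theta,5}=\{M\in SL(2,\mathbb{Z}): M\equiv\pm\begin{pmatrix}1&0\\0&1\end{pmatrix}\text{ or }\pm\begin{pmatrix}0&-1\\1&0\end{pmatrix}\pmod 5\}$. For $M=\begin{pmatrix} a&b\\ c&d\end{pmatrix}\in\Gamma_{\theta,5}$ define $g(M)=\frac{6b}{5}+\frac{2ab}{5}+\frac{2cd}{5}$ if $M\equiv I$, $\frac{24b}{5}+\frac{2ab}{5}+\frac{2cd}{5}$ if $M\equiv -I$, $5+\frac{6d}{5}+\frac{2ab}{5}+\frac{2cd}{5}$ if $M\equiv\begin{pmatrix}0&-1\\1&0\end{pmatrix}$, $5-\frac{6d}{5}+\frac{2ab}{5}+\frac{2cd}{5}$ if $M\equiv\begin{pmatrix}0&1\\-1&0\end{pmatrix}$ (all mod 5), and $f(M)$ by the same case split with values $\frac{4b}{5}+\frac{8ab}{5}+\frac{8cd}{5}$, $\frac{6b}{5}+\frac{8ab}{5}+\frac{8cd}{5}$, $5+\frac{4d}{5}+\frac{8ab}{5}+\frac{8cd}{5}$, $5-\frac{4d}{5}+\frac{8ab}{5}+\frac{8cd}{5}$ respectively. For $k\in\mathbb{Z}$,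 $\nu_{G^k}(M)=\exp(\frac{\pi ik}{5}g(M))$ and $\nu_{F^k}(M)=\exp(\frac{\pi ik}{5}f(M))$; these are the multiplier systems (weight $2k$) of $G^k$ and $F^k$, where $G=\eta^6/\big(\theta\begin{bmatrix}3/5\\3/5\end{bmatrix}\theta\begin{bmatrix}3/5\\7/5\end{bmatrix}\big)$, $F=\eta^6/\big(\theta\begin{bmatrix}1/5\\1/5\end{bmatrix}\theta\begin{bmatrix}1/5\\9/5\end{bmatrix}\big)$, with theta constants $\theta\begin{bmatrix}\epsilon\\ \epsilon'\end{bmatrix}=\sum_{n\in\mathbb{Z}}\exp(2\pi i[\frac12(n+\frac\epsilon2)^2\tau+(n+\frac\epsilon2)\frac{\epsilon'}2])$ and $\eta(\tau)=q^{1/24}\prod_{n\ge1}(1-q^n)$. Kernels are $\{M\in\Gamma_{\theta,5}:\nu(M)=1\}$. *)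

(* Defs.v *)
From Stdlib Require Import Reals ZArith Bool.
From Coquelicot Require Import Coquelicot.
Open Scope R_scope.

Record Mat := mkMat { ma : Z; mb : Z; mc : Z; md : Z }.

Definition cong5 (x y : Z) : bool := Z.eqb (Z.modulo x 5) (Z.modulo y 5).

Definition isI (M : Mat) : bool :=
  cong5 (ma M) 1 && cong5 (mb M) 0 && cong5 (mc M) 0 && cong5 (md M) 1.
Definition isNegI (M : Mat) : bool :=
  cong5 (ma M) (-1) && cong5 (mb M) 0 && cong5 (mc M) 0 && cong5 (md M) (-1).
Definition isS (M : Mat) : bool :=
  cong5 (ma M) 0 && cong5 (mb M) (-1) && cong5 (mc M) 1 && cong5 (md M) 0.
Definition isNegS (M : Mat) : bool :=
  cong5 (ma M) 0 && cong5 (mb M) 1 && cong5 (mc M) (-1) && cong5 (md M) 0.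

Definition inGamma (M : Mat) : Prop :=
  (ma M * md M - mb M * mc M = 1)%Z /\
  (isI M || isNegI M || isS M || isNegS M) = true.

Definition g (M : Mat) : R :=
  let a := IZR (ma M) in let b := IZR (mb M) in
  let c := IZR (mc M) in let d := IZR (md M) in
  if isI M then 6*b/5 + 2*a*b/5 + 2*c*d/5
  else if isNegI M then 24*b/5 + 2*a*b/5 + 2*c*d/5
  else if isS M then 5 + 6*d/5 + 2*a*b/5 + 2*c*d/5
  else if isNegS M then 5 - 6*d/5 + 2*a*b/5 + 2*c*d/5
  else 0.

Definition f (M : Mat) : R :=
  let a := IZR (ma M) in let b := IZR (mb M) in
  let c := IZR (mc M) in let d := IZR (md M) in
  if isI M then 4*b/5 + 8*a*b/5 + 8*c*d/5
  else if isNegI M then 6*b/5 + 8*a*b/5 + 8*c*d/5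
  else if isS M then 5 + 4*d/5 + 8*a*b/5 + 8*c*d/5
  else if isNegS M then 5 - 4*d/5 + 8*a*b/5 + 8*c*d/5
  else 0.

Definition cexpi (t : R) : C := (cos t, sin t).

Definition nu (h : Mat -> R) (k : Z) (M : Mat) : C := cexpi (PI * IZR k * h M / 5).
Definition nuG (k : Z) := nu g k.
Definition nuF (k : Z) := nu f k.

Definition Ker (nuk : Mat -> C) (M : Mat) : Prop := inGamma M /\ nuk M = RtoC 1.

(* Main.v *)
Require Import Defs.
From Stdlib Require Import Reals ZArith Lia Lra.
From Coquelicot Require Import Coquelicot.

Local Open Scope Z_scope.
Lemma L (A B : Z) (HAB : (A + B) mod 5 = 0) (HA : A mod 5 <> 0) (b c Q : Z) :
  (50 | 10*(A*b + B*c) + 50*Q) <-> b mod 5 = c mod 5.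
Proof.
  pose proof (Z.div_mod b 5 ltac:(lia)). pose proof (Z.div_mod c 5 ltac:(lia)). pose proof (Z.mod_pos_bound b 5 ltac:(lia)). pose proof (Z.mod_pos_bound c 5 ltac:(lia)).
  split.
  - intros [m Hm].
    assert (E : A*(b - c) = 5*(m - Q) - (A+B)*c) by lia.
    pose proof (Z.div_mod (A+B) 5 ltac:(lia)). rewrite HAB in H3.
    assert (E2 : (A*(b-c)) mod 5 = 0).
    { rewrite E, H3. replace (5 * (m - Q) - (5 * ((A + B) / 5) + 0) * c) with ((m - Q - (A+B)/5*c) * 5) by ring.
      apply Z_mod_mult. }
    rewrite Z.mul_mod in E2 by lia.
    assert (R : (b - c) mod 5 = 0).
    { pose proof (Z.mod_pos_bound A 5 ltac:(lia)). pose proof (Z.mod_pos_bound (b-c) 5).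
      destruct (Z.eq_dec ((b-c) mod 5) 0) as [|Hn]; auto. exfalso.
      assert (HA' : A mod 5 = 1 \/ A mod 5 = 2 \/ A mod 5 = 3 \/ A mod 5 = 4) by lia.
      assert (HB' : (b-c) mod 5 = 1 \/ (b-c) mod 5 = 2 \/ (b-c) mod 5 = 3 \/ (b-c) mod 5 = 4) by lia.
      destruct HA' as [X|[X|[X|X]]]; destruct HB' as [Y|[Y|[Y|Y]]]; rewrite X, Y in E2; discriminate. }
    apply Z.mod_divide in R; [|lia]. destruct R as [t Ht].
    replace b with (c + t*5) by lia. apply Z_mod_plus_full.
  - intros Hbc.
    assert (Ht : b - c = 5 * (b/5 - c/5)) by lia.
    pose proof (Z.div_mod (A+B) 5 ltac:(lia)). rewrite HAB in H3.
    exists (A*(b/5 - c/5) + (A+B)/5*c + Q).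
    assert (A*b + B*c = A*(b-c) + (A+B)*c) by ring. lia.
Qed.
Local Open Scope R_scope.
Lemma cos_2n (n : Z) : cos (2 * IZR n * PI) = 1%R.
Proof.
  destruct (Z_le_gt_dec 0 n) as [H|H].
  - replace n with (Z.of_nat (Z.to_nat n)) by lia.
    rewrite <- INR_IZR_INZ.
    replace (2 * INR (Z.to_nat n) * PI)%R with (0 + 2 * INR (Z.to_nat n) * PI)%R by ring.
    rewrite cos_period. apply cos_0.
  - replace n with (- Z.of_nat (Z.to_nat (- n)))%Z by lia.
    rewrite opp_IZR, <- INR_IZR_INZ.
    replace (2 * - INR (Z.to_nat (-n)) * PI)%R with (- (0 + 2 * INR (Z.to_nat (-n)) * PI))%R by ring.
    rewrite cos_neg, cos_period. apply cos_0.
Qed.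

Lemma cexpi_one (t : R) : cexpi t = RtoC 1 <-> exists n : Z, t = (2 * IZR n * PI)%R.
Proof.
  unfold cexpi, RtoC. split.
  - intros H. injection H as Hc Hs.
    destruct (sin_eq_0_0 t Hs) as [j Hj].
    exists (j / 2)%Z.
    destruct (Z.eq_dec (j mod 2) 0) as [E|E].
    + assert (Hj2 : j = (2 * (j/2))%Z) by (pose proof (Z.div_mod j 2); lia).
      subst t. rewrite Hj2 at 1. rewrite mult_IZR. ring.
    + exfalso. assert (Hj2 : j = (2 * (j/2) + 1)%Z) by (pose proof (Z.mod_pos_bound j 2); pose proof (Z.div_mod j 2); lia).
      subst t. rewrite Hj2, plus_IZR, mult_IZR in Hc.
      replace ((2 * IZR (j / 2) + 1) * PI)%R with (2 * IZR (j/2) * PI + PI)%R in Hc by ring.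
      rewrite neg_cos, cos_2n in Hc. lra.
  - intros [n ->]. rewrite cos_2n. f_equal.
    apply sin_eq_0_1. exists (2 * n)%Z. rewrite mult_IZR. ring.
Qed.

Lemma nu_ker (h : Mat -> R) (k : Z) (M : Mat) (N : Z) :
  h M = (IZR N / 5)%R -> (nu h k M = RtoC 1 <-> Z.divide 50 (k * N)).
Proof.
  intros HN. unfold nu. rewrite cexpi_one, HN. split.
  - intros [n Hn]. exists n. apply eq_IZR. rewrite !mult_IZR.
    assert (PI > 0)%R by apply PI_RGT_0.
    apply (Rmult_eq_reg_l (PI / 25)%R); [|apply Rgt_not_eq; lra].
    replace (PI/25 * (IZR k * IZR N))%R with (PI * IZR k * (IZR N / 5) / 5)%R by field.
    rewrite Hn. field.
  - intros [n Hn]. exists n.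
    replace (PI * IZR k * (IZR N / 5) / 5)%R with (PI / 25 * IZR (k * N))%R
      by (rewrite mult_IZR; field).
    rewrite Hn, mult_IZR. field.
Qed.

Lemma coprime_k (k N : Z)
  (hk : (Z.modulo k 10 = 1 \/ Z.modulo k 10 = 9 \/ Z.modulo k 10 = 3 \/ Z.modulo k 10 = 7)%Z) :
  Z.divide 50 (k * N) <-> Z.divide 50 N.
Proof.
  split.
  - intros H. apply (Z.gauss _ k); auto.
    rewrite <- Z.gcd_mod by lia. rewrite Z.gcd_comm.
    assert (E: ((k mod 50) mod 10 = k mod 10)%Z) by (apply Z.mod_mod_divide; exists 5%Z; lia).
    pose proof (Z.mod_pos_bound k 50). pose proof (Z.div_mod (k mod 50) 10).
    assert (Q: ((k mod 50)/10 = 0 \/ (k mod 50)/10 = 1 \/ (k mod 50)/10 = 2 \/ (k mod 50)/10 = 3 \/ (k mod 50)/10 = 4)%Z) by lia.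
    destruct Q as [Q|[Q|[Q|[Q|Q]]]]; destruct hk as [R|[R|[R|R]]];
      (assert (HS : exists s : Z, (k mod 50 = s /\ s = 10 * ((k mod 50)/10) + k mod 10)%Z) by (eexists; split; [reflexivity|lia]);
       destruct HS as [s [S1 S2]]; rewrite Q, R in S2; simpl in S2; rewrite S1, S2; reflexivity).
  - intros H. apply Z.divide_mul_r. exact H.
Qed.

Local Open Scope Z_scope.

Definition Ng (M : Mat) : Z :=
  let a := ma M in let b := mb M in let c := mc M in let d := md M in
  if isI M then 6*b + 2*a*b + 2*c*d
  else if isNegI M then 24*b + 2*a*b + 2*c*d
  else if isS M then 25 + 6*d + 2*a*b + 2*c*d
  else if isNegS M then 25 - 6*d + 2*a*b + 2*c*d
  else 0.

Definition Nf (M : Mat) : Z :=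
  let a := ma M in let b := mb M in let c := mc M in let d := md M in
  if isI M then 4*b + 8*a*b + 8*c*d
  else if isNegI M then 6*b + 8*a*b + 8*c*d
  else if isS M then 25 + 4*d + 8*a*b + 8*c*d
  else if isNegS M then 25 - 4*d + 8*a*b + 8*c*d
  else 0.

Lemma g_eq (M : Mat) : g M = (IZR (Ng M) / 5)%R.
Proof.
  unfold g, Ng; cbv zeta.
  destruct (isI M); [|destruct (isNegI M); [|destruct (isS M); [|destruct (isNegS M)]]];
  rewrite ?plus_IZR, ?minus_IZR, ?mult_IZR; field.
Qed.

Lemma f_eq (M : Mat) : Defs.f M = (IZR (Nf M) / 5)%R.
Proof.
  unfold Defs.f, Nf; cbv zeta.
  destruct (isI M); [|destruct (isNegI M); [|destruct (isS M); [|destruct (isNegS M)]]];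
  rewrite ?plus_IZR, ?minus_IZR, ?mult_IZR; field.
Qed.

Definition RHS (M : Mat) : Prop :=
  Z.divide 5 (mb M) /\ Z.divide 5 (mc M) /\
  Z.modulo (Z.div (mb M) 5) 5 = Z.modulo (Z.div (mc M) 5) 5.

Ltac brk H := let H1 := fresh "Ha" in let H2 := fresh "Hb" in
  let H3 := fresh "Hc" in let H4 := fresh "Hd" in
  unfold isI, isNegI, isS, isNegS, cong5 in H; simpl in H;
  apply andb_prop in H; destruct H as [H H4];
  apply andb_prop in H; destruct H as [H H3];
  apply andb_prop in H; destruct H as [H1 H2];
  apply Z.eqb_eq in H1; apply Z.eqb_eq in H2; apply Z.eqb_eq in H3; apply Z.eqb_eq in H4;
  try change (1 mod 5) with 1 in *; try change (0 mod 5) with 0 in *; try change ((-1) mod 5) with 4 in *.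

Lemma fin_rhs (b c b' c' : Z) : b = 5*b' -> c = 5*c' ->
  (b' mod 5 = c' mod 5 <-> (5 | b) /\ (5 | c) /\ b' mod 5 = c' mod 5).
Proof.
  intros Hb Hc. split.
  - intros H. split; [exists b'; lia|split; [exists c'; lia|exact H]].
  - intros [_ [_ H]]; exact H.
Qed.


Lemma core (h : Mat -> Z) (Hh : h = Ng \/ h = Nf) (M : Mat) :
  inGamma M -> ((50 | h M) <-> RHS M).
Proof.
  destruct M as [a b c d]. unfold inGamma, RHS. simpl. intros [_ HG].
  pose proof (Z.div_mod a 5 ltac:(lia)). pose proof (Z.div_mod b 5 ltac:(lia)).
  pose proof (Z.div_mod c 5 ltac:(lia)). pose proof (Z.div_mod d 5 ltac:(lia)).
  remember (a/5) as a'. remember (b/5) as b'. remember (c/5) as c'. remember (d/5) as d'.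
  destruct Hh as [->| ->]; unfold Ng, Nf; cbv zeta; cbn [ma mb mc md];
  destruct (isI (mkMat a b c d)) eqn:HI.
  - brk HI. assert (Ea : a = 5*a'+1) by lia. assert (Eb : b = 5*b') by lia.
    assert (Ec : c = 5*c') by lia. assert (Ed : d = 5*d'+1) by lia.
    replace (6*b + 2*a*b + 2*c*d) with (10*(4*b' + 1*c') + 50*(a'*b'+c'*d'))
      by (rewrite Ea, Eb, Ec, Ed; ring).
    rewrite L by (reflexivity || discriminate). apply fin_rhs; lia.
  - destruct (isNegI (mkMat a b c d)) eqn:HN.
    + brk HN. assert (Ea : a = 5*a'+4) by lia. assert (Eb : b = 5*b') by lia.
      assert (Ec : c = 5*c') by lia. assert (Ed : d = 5*d'+4) by lia.
      replace (24*b + 2*a*b + 2*c*d) with (10*(16*b' + 4*c') + 50*(a'*b'+c'*d'))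
        by (rewrite Ea, Eb, Ec, Ed; ring).
      rewrite L by (reflexivity || discriminate). apply fin_rhs; lia.
    + destruct (isS (mkMat a b c d)) eqn:HS.
      * brk HS. split; [intros [m Hm]; lia | intros [[t Ht] _]; lia].
      * destruct (isNegS (mkMat a b c d)) eqn:HS2.
        -- brk HS2. split; [intros [m Hm]; lia | intros [[t Ht] _]; lia].
        -- simpl in HG; discriminate HG.
  - brk HI. assert (Ea : a = 5*a'+1) by lia. assert (Eb : b = 5*b') by lia.
    assert (Ec : c = 5*c') by lia. assert (Ed : d = 5*d'+1) by lia.
    replace (4*b + 8*a*b + 8*c*d) with (10*(6*b' + 4*c') + 50*(4*(a'*b'+c'*d')))
      by (rewrite Ea, Eb, Ec, Ed; ring).
    rewrite L by (reflexivity || discriminate). apply fin_rhs; lia.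
  - destruct (isNegI (mkMat a b c d)) eqn:HN.
    + brk HN. assert (Ea : a = 5*a'+4) by lia. assert (Eb : b = 5*b') by lia.
      assert (Ec : c = 5*c') by lia. assert (Ed : d = 5*d'+4) by lia.
      replace (6*b + 8*a*b + 8*c*d) with (10*(19*b' + 16*c') + 50*(4*(a'*b'+c'*d')))
        by (rewrite Ea, Eb, Ec, Ed; ring).
      rewrite L by (reflexivity || discriminate). apply fin_rhs; lia.
    + destruct (isS (mkMat a b c d)) eqn:HS.
      * brk HS. split; [intros [m Hm]; lia | intros [[t Ht] _]; lia].
      * destruct (isNegS (mkMat a b c d)) eqn:HS2.
        -- brk HS2. split; [intros [m Hm]; lia | intros [[t Ht] _]; lia].
        -- simpl in HG; discriminate HG.
Qed.

Theorem mainTheorem11 (k : Z)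
  (hk : (Z.modulo k 10 = 1 \/ Z.modulo k 10 = 9 \/ Z.modulo k 10 = 3 \/ Z.modulo k 10 = 7)%Z) :
  (forall M : Mat,
     Ker (nuG k) M <->
     (inGamma M /\ Z.divide 5 (mb M) /\ Z.divide 5 (mc M) /\
      Z.modulo (Z.div (mb M) 5) 5 = Z.modulo (Z.div (mc M) 5) 5)) /\
  (forall M : Mat, Ker (nuG k) M <-> Ker (nuF k) M).
Proof.
  assert (KG : forall M : Mat, Ker (nuG k) M <-> inGamma M /\ RHS M).
  { intros M. unfold Ker, nuG. rewrite (nu_ker g k M (Ng M) (g_eq M)), coprime_k by exact hk.
    split; intros [HG H]; split; auto; apply (core Ng (or_introl eq_refl) M HG); auto. }
  assert (KF : forall M : Mat, Ker (nuF k) M <-> inGamma M /\ RHS M).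
  { intros M. unfold Ker, nuF. rewrite (nu_ker Defs.f k M (Nf M) (f_eq M)), coprime_k by exact hk.
    split; intros [HG H]; split; auto; apply (core Nf (or_intror eq_refl) M HG); auto. }
  split; intros M.
  - rewrite KG. unfold RHS. tauto.
  - rewrite KG, KF. tauto.
Qed.
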